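(* (1) With $\mathbf a=v\mathbf c$, the function $$\tilde G(\mathbf a,v)=\sum_{k=1}^N\Big(a_k\big(\ln\tfrac{a_k}{v c_k^{\rm e}}-1+q_k\big)+vc_k^{\rm e}\Big)+A\Big(\ln\tfrac{A}{v}-1\Big),\qquad (\mathbf a,v)\in[0,\infty)^N\times(0,\infty)$$ (with $0\ln 0=0$) has positive definite Hessian at every point of $(0,\infty)^{N+1}$, and is convex. (2) Suppose $f(\phi_{\min})<0$ and let $(\mathbf c^*,v^*,\phi^* )$ be the unique steady state of the linear pump-leak system. Then $(\mathbf c^*,v^* )$ is the unique minimizer of $\tilde G(\mathbf c,v)=v\sum_k\big(c_k(\ln(c_k/c_k^{\rm e})-1+q_k)+c_k^{\rm e}\big)+A(\ln(A/v)-1)$ over the set $\overline{\mathcal S}=\{(\mathbf c,v)\in[0,\infty)^N\times(0,\infty):\sum_kz_kc_k+zA/v=0\}$.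
   Context: Fix an integer $N\ge2$, real valences $z_1,\dots,z_N$ not all zero, positive constants $c_k^{\rm e}$ with $\sum_kz_kc_k^{\rm e}=0$, $A>0$, $z\in\mathbb R$. Let $L$ be a real symmetric positive definite $N\times N$ matrix, $\mathbf p\in\mathbb R^N$ constant, $\zeta>0$, $\mathbf q=(q_k)=L^{-1}\mathbf p$, and $f(\phi)=\sum_kc_k^{\rm e}(\exp(-q_k-z_k\phi)-1)$, which has a unique minimizer $\phi_{\min}$ on $\mathbb R$. For $\mathbf c\in(0,\infty)^N$, $v>0$, $\phi\in\mathbb R$: $\mu_k=\ln(c_k/c_k^{\rm e})+z_k\phi$, $\pi_{\rm w}=\sum_kc_k^{\rm e}-(\sum_kc_k+A/v)$. The linear pump-leak system is $\frac{d}{dt}(v\mathbf c)=-L\boldsymbol\mu-\mathbf p$, $0=\sum_kz_kc_k+zA/v$, $\frac{dv}{dt}=-\zeta\pi_{\rm w}$; a steady state is a point $(\mathbf c,v,\phi)\in(0,\infty)^N\times(0,\infty)\times\mathbb R$ with the constraint holding, $L\boldsymbol\mu+\mathbf p=0$ and $\pi_{\rm w}=0$; when $f(\phi_{\min})<0$ it exists and is unique. *)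

(* Defs.v *)
(* classical reals. Vectors in R^N are functions nat -> R,
   only the entries 0..N-1 being relevant. *)
From Stdlib Require Import Reals Lra Lia.
Open Scope R_scope.

Fixpoint rsum (n : nat) (f : nat -> R) : R :=
  match n with O => 0 | S m => rsum m f + f m end.

(* Gtilde as a function of (a, v), a = v c.  Note a * ln(...) = 0 when a = 0,
   which implements the convention 0 ln 0 = 0. *)
Definition Gt_av (N : nat) (ce q : nat -> R) (A : R) (a : nat -> R) (v : R) : R :=
  rsum N (fun k => a k * (ln (a k / (v * ce k)) - 1 + q k) + v * ce k)
  + A * (ln (A / v) - 1).

Definition Gt_cv (N : nat) (ce q : nat -> R) (A : R) (c : nat -> R) (v : R) : R :=
  v * rsum N (fun k => c k * (ln (c k / ce k) - 1 + q k) + ce k)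
  + A * (ln (A / v) - 1).

(* A point of R^(N+1) is x : nat -> R; coordinates 0..N-1 are a, coordinate N is v. *)
Definition Gt_pt (N : nat) (ce q : nat -> R) (A : R) (x : nat -> R) : R :=
  Gt_av N ce q A x (x N).

Definition unitv (i : nat) : nat -> R := fun k => if Nat.eq_dec k i then 1 else 0.
Definition shift (x : nat -> R) (t : R) (i : nat) : nat -> R :=
  fun k => x k + t * unitv i k.

Definition in_open (n : nat) (x : nat -> R) : Prop := forall k, (k < n)%nat -> 0 < x k.

Definition is_hessian (n : nat) (F : (nat -> R) -> R) (x : nat -> R)
    (H : nat -> nat -> R) : Prop :=
  exists D : (nat -> R) -> nat -> R,
    (forall y, in_open n y -> forall j, (j < n)%nat ->
        derivable_pt_lim (fun t => F (shift y t j)) 0 (D y j)) /\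
    (forall i j, (i < n)%nat -> (j < n)%nat ->
        derivable_pt_lim (fun t => D (shift x t i) j) 0 (H i j)).

Definition pos_def (n : nat) (H : nat -> nat -> R) : Prop :=
  forall h : nat -> R, (exists k, (k < n)%nat /\ h k <> 0) ->
    0 < rsum n (fun i => h i * rsum n (fun j => H i j * h j)).

Definition in_dom (N : nat) (x : nat -> R) : Prop :=
  (forall k, (k < N)%nat -> 0 <= x k) /\ 0 < x N.

Definition convex_on_dom (N : nat) (F : (nat -> R) -> R) : Prop :=
  forall x y t, in_dom N x -> in_dom N y -> 0 <= t <= 1 ->
    F (fun k => t * x k + (1 - t) * y k) <= t * F x + (1 - t) * F y.

Definition mu (ce : nat -> R) (z : nat -> R) (c : nat -> R) (phi : R) : nat -> R :=
  fun k => ln (c k / ce k) + z k * phi.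

Definition piw (N : nat) (ce c : nat -> R) (A v : R) : R :=
  rsum N ce - (rsum N c + A / v).

Definition fphi (N : nat) (ce z q : nat -> R) (phi : R) : R :=
  rsum N (fun k => ce k * (exp (- q k - z k * phi) - 1)).

Definition constraint (N : nat) (z : nat -> R) (zA A : R) (c : nat -> R) (v : R) : Prop :=
  rsum N (fun k => z k * c k) + zA * A / v = 0.

Definition steady_state (N : nat) (z ce : nat -> R) (A zA : R)
    (L : nat -> nat -> R) (p : nat -> R) (c : nat -> R) (v phi : R) : Prop :=
  (forall k, (k < N)%nat -> 0 < c k) /\ 0 < v /\
  constraint N z zA A c v /\
  (forall k, (k < N)%nat ->
     rsum N (fun j => L k j * mu ce z c phi j) + p k = 0) /\
  piw N ce c A v = 0.

Definition in_Sbar (N : nat) (z : nat -> R) (zA A : R) (c : nat -> R) (v : R) : Prop :=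
  (forall k, (k < N)%nat -> 0 <= c k) /\ 0 < v /\ constraint N z zA A c v.

(* Main.v *)
Require Import Defs.
From Stdlib Require Import Reals Lra Lia.
Open Scope R_scope.

Lemma rsum_ext n f g : (forall k, (k < n)%nat -> f k = g k) -> rsum n f = rsum n g.
Proof. induction n; simpl; intros H; auto. rewrite IHn by (intros; apply H; lia). rewrite H by lia; auto. Qed.
Lemma rsum_plus n f g : rsum n (fun k => f k + g k) = rsum n f + rsum n g.
Proof. induction n; simpl; [ring|rewrite IHn; ring]. Qed.
Lemma rsum_minus n f g : rsum n (fun k => f k - g k) = rsum n f - rsum n g.
Proof. induction n; simpl; [ring|rewrite IHn; ring]. Qed.
Lemma rsum_scal n c f : rsum n (fun k => c * f k) = c * rsum n f.
Proof. induction n; simpl; [ring|rewrite IHn; ring]. Qed.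
Lemma rsum_0 n : rsum n (fun _ => 0) = 0.
Proof. induction n; simpl; [ring|rewrite IHn; ring]. Qed.
Lemma rsum_nonneg n f : (forall k, (k < n)%nat -> 0 <= f k) -> 0 <= rsum n f.
Proof. induction n; simpl; intros H; [lra|]. assert (0 <= f n) by (apply H; lia).
 assert (0 <= rsum n f) by (apply IHn; intros; apply H; lia). lra. Qed.
Lemma rsum_le n f g : (forall k, (k < n)%nat -> f k <= g k) -> rsum n f <= rsum n g.
Proof. intros H. assert (0 <= rsum n (fun k => g k - f k)) by (apply rsum_nonneg; intros k Hk; specialize (H k Hk); lra).
 rewrite rsum_minus in H0; lra. Qed.
Lemma rsum_pos n f k : (forall k, (k < n)%nat -> 0 <= f k) -> (k < n)%nat -> 0 < f k -> 0 < rsum n f.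
Proof. induction n; simpl; intros H Hk Hf; [lia|].
 assert (0 <= f n) by (apply H; lia).
 destruct (Nat.eq_dec k n). subst. assert (0 <= rsum n f) by (apply rsum_nonneg; intros; apply H; lia). lra.
 assert (0 < rsum n f) by (apply IHn; auto; lia). lra. Qed.
Lemma rsum_zero_each n f : (forall k, (k < n)%nat -> 0 <= f k) -> rsum n f = 0 -> forall k, (k < n)%nat -> f k = 0.
Proof. intros H Hs k Hk. destruct (Rle_lt_or_eq_dec 0 (f k) (H k Hk)); auto.
 pose proof (rsum_pos n f k H Hk r). lra. Qed.
Lemma rsum_unit n k g : (k < n)%nat -> rsum n (fun j => unitv k j * g j) = g k.
Proof. induction n; simpl; intros Hk; [lia|]. unfold unitv at 2.
 destruct (Nat.eq_dec n k). subst. rewrite (rsum_ext _ _ (fun _ => 0)). rewrite rsum_0; ring.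
 intros j Hj; unfold unitv; destruct (Nat.eq_dec j k); [lia|ring].
 rewrite IHn by lia; ring. Qed.
Lemma rsum_unit0 n k g : (n <= k)%nat -> rsum n (fun j => unitv k j * g j) = 0.
Proof. intros Hk. rewrite (rsum_ext _ _ (fun _ => 0)). apply rsum_0.
 intros j Hj; unfold unitv; destruct (Nat.eq_dec j k); [lia|ring]. Qed.

Lemma KL a b : 0 <= a -> 0 < b -> a - b <= a * ln (a / b) /\ (a * ln (a / b) = a - b -> a = b).
Proof. intros Ha Hb. destruct (Rle_lt_or_eq_dec 0 a Ha) as [Ha'|Ha'].
 2:{ subst. split; intros; lra. }
 set (y := ln (a / b)).
 assert (E : exp (- y) = b / a).
 { unfold y. rewrite <- ln_Rinv. rewrite exp_ln. field; lra.
   apply Rinv_0_lt_compat; apply Rdiv_lt_0_compat; lra. apply Rdiv_lt_0_compat; lra. }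
 destruct (Req_dec y 0) as [Hy|Hy].
 - assert (a / b = 1). { rewrite <- (exp_ln (a/b)) by (apply Rdiv_lt_0_compat; lra). fold y. rewrite Hy. apply exp_0. }
   assert (a = b). { apply (Rmult_eq_reg_r (/b)). unfold Rdiv in H. rewrite H. field; lra. apply Rinv_neq_0_compat; lra. }
   rewrite Hy. split; intros; lra.
 - pose proof (exp_ineq1 (-y)) as H. assert (-y <> 0) by lra. specialize (H H0). rewrite E in H.
   assert (a * (1 + - y) < a * (b / a)) by (apply Rmult_lt_compat_l; lra).
   replace (a * (b/a)) with b in H1 by (field; lra). split; intros; lra.
Qed.

Lemma logsum a1 a2 b1 b2 : 0 <= a1 -> 0 <= a2 -> 0 <= b1 -> 0 <= b2 ->
  (b1 = 0 -> a1 = 0) -> (b2 = 0 -> a2 = 0) -> 0 < b1 + b2 ->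
  (a1 + a2) * ln ((a1 + a2) / (b1 + b2)) <= a1 * ln (a1 / b1) + a2 * ln (a2 / b2).
Proof.
  intros H1 H2 H3 H4 H5 H6 HB.
  set (S := a1 + a2). set (B := b1 + b2). assert (HB' : 0 < B) by (unfold B; lra).
  destruct (Rle_lt_or_eq_dec 0 S ltac:(unfold S; lra)) as [HS|HS].
  2:{ rewrite <- HS. assert (a1 = 0) by (unfold S in HS; lra). assert (a2 = 0) by (unfold S in HS; lra).
      subst a1 a2. lra. }
  assert (key : forall a b, 0 <= a -> 0 <= b -> (b = 0 -> a = 0) ->
     a * ln (S / B) + a - b * S / B <= a * ln (a / b)).
  { intros a b Ha Hb Hab. destruct (Rle_lt_or_eq_dec 0 a Ha) as [Ha'|Ha'].
    - assert (0 < b) by (destruct (Rle_lt_or_eq_dec 0 b Hb); auto; lra).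
      assert (0 < b * S / B) by (apply Rdiv_lt_0_compat; [apply Rmult_lt_0_compat; lra| unfold B; lra]).
      destruct (KL a (b * S / B)) as [K _]; try lra.
      replace (a / (b * S / B)) with ((a / b) * / (S / B)) in K by (field; lra).
      rewrite ln_mult, ln_Rinv in K. lra.
      all: try apply Rinv_0_lt_compat; apply Rdiv_lt_0_compat; lra.
    - subst a. assert (0 <= b * S / B) by (apply Rmult_le_pos; [apply Rmult_le_pos|apply Rlt_le, Rinv_0_lt_compat]; lra). lra. }
  pose proof (key a1 b1 H1 H3 H5). pose proof (key a2 b2 H2 H4 H6).
  assert (E : a1 * ln (S / B) + a1 - b1 * S / B + (a2 * ln (S / B) + a2 - b2 * S / B) = S * ln (S / B)).
  { unfold S, B in *. field. lra. }
  fold S B. lra.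
Qed.

Lemma scale_ln t a b : 0 <= t -> 0 < b -> (t * a) * ln ((t * a) / (t * b)) = t * (a * ln (a / b)).
Proof. intros Ht Hb. destruct (Rle_lt_or_eq_dec 0 t Ht) as [H|H].
 - replace ((t * a) / (t * b)) with (a / b) by (field; lra). ring.
 - subst. ring. Qed.

Lemma ln_concave t v1 v2 : 0 <= t <= 1 -> 0 < v1 -> 0 < v2 ->
  t * ln v1 + (1 - t) * ln v2 <= ln (t * v1 + (1 - t) * v2).
Proof. intros Ht H1 H2. set (V := t * v1 + (1 - t) * v2).
  assert (HV : 0 < V). { unfold V. destruct (Rle_lt_or_eq_dec 0 t ltac:(lra)).
    assert (0 <= (1-t) * v2) by (apply Rmult_le_pos; lra). assert (0 < t * v1) by (apply Rmult_lt_0_compat; lra). lra.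
    subst. lra. }
  assert (L : forall w, 0 < w -> ln w <= ln V + w / V - 1).
  { intros w Hw. destruct (KL V w) as [K _]; try lra.
    replace (V / w) with (V * / w) in K by reflexivity.
    rewrite ln_mult, ln_Rinv in K by (try apply Rinv_0_lt_compat; lra).
    assert (1 - w / V <= ln V - ln w).
    { apply (Rmult_le_reg_l V); auto. replace (V * (1 - w / V)) with (V - w) by (field; lra). lra. }
    lra. }
  pose proof (L v1 H1). pose proof (L v2 H2).
  assert (t * ln v1 <= t * (ln V + v1 / V - 1)) by (apply Rmult_le_compat_l; lra).
  assert ((1 - t) * ln v2 <= (1 - t) * (ln V + v2 / V - 1)) by (apply Rmult_le_compat_l; lra).
  assert (t * (ln V + v1 / V - 1) + (1 - t) * (ln V + v2 / V - 1) = ln V) by (unfold V in *; field; lra).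
  lra.
Qed.

Lemma rsum_comb n a b f g : rsum n (fun k => a * f k + b * g k) = a * rsum n f + b * rsum n g.
Proof. rewrite rsum_plus, !rsum_scal. reflexivity. Qed.

Lemma convex_part N ce q A (HA : 0 < A) (Hce : forall k, (k < N)%nat -> 0 < ce k) :
  convex_on_dom N (Gt_pt N ce q A).
Proof.
  intros x y t [Hx HxN] [Hy HyN] Ht. unfold Gt_pt, Gt_av.
  set (V := t * x N + (1 - t) * y N).
  assert (HV : 0 < V). { unfold V. destruct (Rle_lt_or_eq_dec 0 t ltac:(lra)).
    assert (0 <= (1-t) * y N) by (apply Rmult_le_pos; lra). assert (0 < t * x N) by (apply Rmult_lt_0_compat; lra). lra.
    subst. lra. }
  assert (T : forall k, (k < N)%nat ->
    (t * x k + (1 - t) * y k) * (ln ((t * x k + (1 - t) * y k) / (V * ce k)) - 1 + q k) + V * ce k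
    <= t * (x k * (ln (x k / (x N * ce k)) - 1 + q k) + x N * ce k)
       + (1 - t) * (y k * (ln (y k / (y N * ce k)) - 1 + q k) + y N * ce k)).
  { intros k Hk. specialize (Hce k Hk). specialize (Hx k Hk). specialize (Hy k Hk).
    assert (LS := logsum (t * x k) ((1 - t) * y k) (t * (x N * ce k)) ((1 - t) * (y N * ce k))).
    replace (t * (x N * ce k) + (1 - t) * (y N * ce k)) with (V * ce k) in LS by (unfold V; ring).
    rewrite !scale_ln in LS by (try apply Rmult_lt_0_compat; lra).
    assert (LS' : (t * x k + (1 - t) * y k) * ln ((t * x k + (1 - t) * y k) / (V * ce k)) <=
         t * (x k * ln (x k / (x N * ce k))) + (1 - t) * (y k * ln (y k / (y N * ce k)))).
    { apply LS; try apply Rmult_le_pos; try lra; try (apply Rmult_lt_0_compat; lra).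
      1,2: apply Rmult_le_pos; lra.
      - intros E. destruct (Rmult_integral _ _ E) as [E'|E']. subst; ring.
        assert (0 < x N * ce k) by (apply Rmult_lt_0_compat; lra). lra.
      - intros E. destruct (Rmult_integral _ _ E) as [E'|E']. rewrite E'; ring.
        assert (0 < y N * ce k) by (apply Rmult_lt_0_compat; lra). lra. }
    match goal with |- ?L <= ?R =>
      assert (E : L - R = (t * x k + (1 - t) * y k) * ln ((t * x k + (1 - t) * y k) / (V * ce k)) -
         (t * (x k * ln (x k / (x N * ce k))) + (1 - t) * (y k * ln (y k / (y N * ce k))))) by (unfold V; ring) end.
    lra. }
  assert (Hsum := rsum_le N _ _ T).
  rewrite rsum_comb in Hsum. rewrite rsum_plus in Hsum. rewrite (rsum_scal N V) in Hsum.
  assert (LC := ln_concave t (x N) (y N) Ht HxN HyN). fold V in LC.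
  unfold Rdiv. rewrite !ln_mult by (try apply Rinv_0_lt_compat; lra).
  rewrite !ln_Rinv by lra.
  assert (A * (ln A + - ln V - 1) <= t * (A * (ln A + - ln (x N) - 1)) + (1 - t) * (A * (ln A + - ln (y N) - 1))).
  { assert (A * (t * ln (x N) + (1 - t) * ln (y N)) <= A * ln V) by (apply Rmult_le_compat_l; lra). nra. }
  unfold Rdiv in Hsum. rewrite rsum_plus, (rsum_scal N V). lra.
Qed.

Lemma muq_zero N ce z L p q cs phis
  (Lpd : pos_def N L)
  (Hq : forall k, (k < N)%nat -> rsum N (fun j => L k j * q j) = p k)
  (Hs : forall k, (k < N)%nat -> rsum N (fun j => L k j * mu ce z cs phis j) + p k = 0) :
  forall k, (k < N)%nat -> mu ce z cs phis k + q k = 0.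
Proof.
  intros k Hk. destruct (Req_dec (mu ce z cs phis k + q k) 0) as [E|E]; auto.
  exfalso. assert (P := Lpd (fun i => mu ce z cs phis i + q i) (ex_intro _ k (conj Hk E))).
  rewrite (rsum_ext _ _ (fun _ => 0)) in P. rewrite rsum_0 in P; lra.
  intros i Hi. rewrite (rsum_ext _ _ (fun j => L i j * mu ce z cs phis j + L i j * q j)).
  rewrite rsum_plus, Hq by auto. specialize (Hs i Hi). replace (rsum N (fun j : nat => L i j * mu ce z cs phis j) + p i) with 0 by lra. ring.
  intros; ring.
Qed.

Definition KLt (c cs : nat -> R) k := c k * ln (c k / cs k) - c k + cs k.

Lemma Gexpr N ce q A zA z cs vs phis c v
  (Hce : forall k, (k < N)%nat -> 0 < ce k)
  (Hcs : forall k, (k < N)%nat -> 0 < cs k) (Hvs : 0 < vs)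
  (Hmq : forall k, (k < N)%nat -> ln (cs k / ce k) = - q k - z k * phis)
  (Hpiw : rsum N ce - rsum N cs = A / vs)
  (Hc : forall k, (k < N)%nat -> 0 <= c k) (Hv : 0 < v)
  (Hcon : rsum N (fun k => z k * c k) + zA * A / v = 0) :
  Gt_cv N ce q A c v = v * rsum N (KLt c cs) + phis * zA * A + v * A / vs + A * (ln (A / v) - 1).
Proof.
  unfold Gt_cv.
  rewrite (rsum_ext _ _ (fun k => KLt c cs k - phis * (z k * c k) + (ce k - cs k))).
  rewrite rsum_plus, rsum_minus, rsum_scal, rsum_minus, Hpiw.
  replace (rsum N (fun k => z k * c k)) with (- (zA * A / v)) by lra.
  field; lra.
  intros k Hk. unfold KLt. specialize (Hc k Hk). specialize (Hcs k Hk). specialize (Hce k Hk).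
  destruct (Rle_lt_or_eq_dec 0 (c k) Hc) as [H|H].
  - replace (c k / ce k) with ((c k / cs k) * (cs k / ce k)) by (field; lra).
    rewrite ln_mult, Hmq by (auto; apply Rdiv_lt_0_compat; lra). ring.
  - rewrite <- H. ring.
Qed.

Lemma part2 N ce q A zA z cs vs phis
  (HA : 0 < A)
  (Hce : forall k, (k < N)%nat -> 0 < ce k)
  (Hcs : forall k, (k < N)%nat -> 0 < cs k) (Hvs : 0 < vs)
  (Hmq : forall k, (k < N)%nat -> ln (cs k / ce k) = - q k - z k * phis)
  (Hpiw : rsum N ce - rsum N cs = A / vs)
  (Hcons : rsum N (fun k => z k * cs k) + zA * A / vs = 0) :
  (forall c v, in_Sbar N z zA A c v -> Gt_cv N ce q A cs vs <= Gt_cv N ce q A c v) /\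
  (forall c v, in_Sbar N z zA A c v -> Gt_cv N ce q A c v <= Gt_cv N ce q A cs vs ->
          (forall k, (k < N)%nat -> c k = cs k) /\ v = vs).
Proof.
  assert (G0 : Gt_cv N ce q A cs vs = phis * zA * A + A + A * (ln (A / vs) - 1)).
  { rewrite (Gexpr N ce q A zA z cs vs phis cs vs); auto.
    rewrite (rsum_ext _ _ (fun _ => 0)). rewrite rsum_0. field; lra.
    intros k Hk. unfold KLt. unfold Rdiv. rewrite Rinv_r, ln_1 by (specialize (Hcs k Hk); lra). ring.
    intros k Hk; specialize (Hcs k Hk); lra. }
  assert (Hdiff : forall c v, in_Sbar N z zA A c v ->
     Gt_cv N ce q A c v - Gt_cv N ce q A cs vs = v * rsum N (KLt c cs) + (A / vs) * (v - vs - vs * ln (v / vs))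
     /\ 0 <= rsum N (KLt c cs) /\ 0 <= v - vs - vs * ln (v / vs)).
  { intros c v [Hc [Hv Hcon]]. rewrite G0. rewrite (Gexpr N ce q A zA z cs vs phis c v); auto.
    split; [|split].
    - replace (ln (A / v)) with (ln (A / vs) - ln (v / vs)).
      field; lra.
      replace (A / vs) with ((A / v) * (v / vs)) by (field; lra).
      rewrite ln_mult by (apply Rdiv_lt_0_compat; lra). ring.
    - apply rsum_nonneg. intros k Hk. unfold KLt. destruct (KL (c k) (cs k)); auto. lra.
    - destruct (KL vs v) as [H1 _]; try lra.
      replace (ln (v / vs)) with (- ln (vs / v)). lra.
      replace (v / vs) with (/ (vs / v)) by (field; lra). rewrite ln_Rinv. ring. apply Rdiv_lt_0_compat; lra. }
  split.
  - intros c v Hs. destruct (Hdiff c v Hs) as [E [P1 P2]].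
    destruct Hs as [_ [Hv _]].
    assert (0 <= v * rsum N (KLt c cs)) by (apply Rmult_le_pos; lra).
    assert (0 <= (A / vs) * (v - vs - vs * ln (v / vs))) by (apply Rmult_le_pos; auto; apply Rlt_le, Rdiv_lt_0_compat; lra).
    lra.
  - intros c v Hs Hle. destruct (Hdiff c v Hs) as [E [P1 P2]].
    destruct Hs as [Hc [Hv _]].
    assert (0 <= v * rsum N (KLt c cs)) by (apply Rmult_le_pos; lra).
    assert (0 <= (A / vs) * (v - vs - vs * ln (v / vs))) by (apply Rmult_le_pos; auto; apply Rlt_le, Rdiv_lt_0_compat; lra).
    assert (E1 : v * rsum N (KLt c cs) = 0) by lra.
    assert (E2 : (A / vs) * (v - vs - vs * ln (v / vs)) = 0) by lra.
    split.
    + assert (rsum N (KLt c cs) = 0).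
      { apply Rmult_integral in E1. destruct E1; lra. }
      intros k Hk. pose proof (rsum_zero_each N (KLt c cs)) as Z.
      assert (KLt c cs k = 0). { apply Z; auto. intros j Hj. unfold KLt. destruct (KL (c j) (cs j)); auto. lra. }
      unfold KLt in H2. destruct (KL (c k) (cs k)) as [_ U]; auto. apply U. lra.
    + apply Rmult_integral in E2. destruct E2 as [E2|E2].
      assert (0 < A / vs) by (apply Rdiv_lt_0_compat; lra). lra.
      destruct (KL vs v) as [_ U]; try lra.
      replace (ln (v / vs)) with (- ln (vs / v)) in E2. symmetry. apply U. lra.
      replace (v / vs) with (/ (vs / v)) by (field; lra). rewrite ln_Rinv. ring. apply Rdiv_lt_0_compat; lra.
Qed.

Notation dpl := derivable_pt_lim.
Lemma Dplus f g x l1 l2 : dpl f x l1 -> dpl g x l2 -> dpl (fun t => f t + g t) x (l1 + l2).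
Proof. apply derivable_pt_lim_plus. Qed.
Lemma Dminus f g x l1 l2 : dpl f x l1 -> dpl g x l2 -> dpl (fun t => f t - g t) x (l1 - l2).
Proof. apply derivable_pt_lim_minus. Qed.
Lemma Dmult f g x l1 l2 : dpl f x l1 -> dpl g x l2 -> dpl (fun t => f t * g t) x (l1 * g x + f x * l2).
Proof. apply derivable_pt_lim_mult. Qed.
Lemma Ddiv f g x l1 l2 : dpl f x l1 -> dpl g x l2 -> g x <> 0 ->
  dpl (fun t => f t / g t) x ((l1 * g x - l2 * f x) / (g x)²).
Proof. apply derivable_pt_lim_div. Qed.
Lemma Dconst c x : dpl (fun _ => c) x 0.
Proof. apply derivable_pt_lim_const. Qed.
Lemma Deq f x l l' : dpl f x l -> l = l' -> dpl f x l'.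
Proof. intros; subst; auto. Qed.
Lemma Dlin a d x : dpl (fun t => a + t * d) x d.
Proof. apply (Deq _ _ (0 + (1 * d + x * 0))); [|ring].
  apply (Dplus (fun _ => a) (fun t => t * d)). apply Dconst.
  apply (Dmult (fun t => t) (fun _ => d)). apply derivable_pt_lim_id. apply Dconst. Qed.
Lemma Dln f x l : 0 < f x -> dpl f x l -> dpl (fun t => ln (f t)) x (l / f x).
Proof. intros H D. unfold Rdiv. rewrite Rmult_comm.
  exact (derivable_pt_lim_comp f ln x l (/ f x) D (derivable_pt_lim_ln _ H)). Qed.
Lemma Dsum n F x l : (forall k, (k < n)%nat -> dpl (F k) x (l k)) ->
  dpl (fun t => rsum n (fun k => F k t)) x (rsum n l).
Proof. induction n; intros H; simpl. apply Dconst.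
  apply Dplus. apply IHn; intros; apply H; lia. apply H; lia. Qed.

Ltac dauto := repeat (first [apply Dlin | apply Dconst | apply Dminus | apply Dplus | apply Ddiv | apply Dmult | apply Dln]).
Ltac simp0 := cbv beta; rewrite ?Rmult_0_l, ?Rplus_0_r.

Lemma dterm a da v dv c qq : 0 < a -> 0 < v -> 0 < c ->
  dpl (fun t => (a + t * da) * (ln ((a + t * da) / ((v + t * dv) * c)) - 1 + qq) + (v + t * dv) * c) 0
     (da * (ln (a / (v * c)) + qq) + dv * (c - a / v)).
Proof. intros Ha Hv Hc. eapply Deq. dauto. all: simp0.
  - apply Rdiv_lt_0_compat; [|apply Rmult_lt_0_compat]; lra.
  - apply Rgt_not_eq, Rmult_lt_0_compat; lra.
  - unfold Rsqr. field. lra.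
Qed.

Lemma dApart A v dv : 0 < A -> 0 < v ->
  dpl (fun t => A * (ln (A / (v + t * dv)) - 1)) 0 (- A * dv / v).
Proof. intros HA Hv. eapply Deq. dauto. all: simp0.
  - apply Rdiv_lt_0_compat; lra.
  - lra.
  - unfold Rsqr. field. lra.
Qed.

Lemma dlnr a da v dv c qq : 0 < a -> 0 < v -> 0 < c ->
  dpl (fun t => ln ((a + t * da) / ((v + t * dv) * c)) + qq) 0 (da / a - dv / v).
Proof. intros Ha Hv Hc. eapply Deq. dauto. all: simp0.
  - apply Rdiv_lt_0_compat; [|apply Rmult_lt_0_compat]; lra.
  - apply Rgt_not_eq, Rmult_lt_0_compat; lra.
  - unfold Rsqr. field. lra.
Qed.

Lemma drat a da v dv c : 0 < v ->
  dpl (fun t => c - (a + t * da) / (v + t * dv)) 0 (- (da * v - a * dv) / (v * v)).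
Proof. intros Hv. eapply Deq. dauto. all: simp0.
  - intro; lra.
  - unfold Rsqr. field. lra.
Qed.

Lemma dAr A v dv : 0 < v -> dpl (fun t => A / (v + t * dv)) 0 (- A * dv / (v * v)).
Proof. intros Hv. eapply Deq. dauto. all: simp0.
  - intro; lra.
  - unfold Rsqr. field. lra.
Qed.

Definition Dfun N ce q A (y : nat -> R) j :=
  if Nat.eq_dec j N then rsum N (fun k => ce k - y k / y N) - A / y N
  else ln (y j / (y N * ce j)) + q j.

Definition Hfun N A (x : nat -> R) i j :=
  if Nat.eq_dec j N then (if Nat.eq_dec i N then (rsum N x + A) / (x N * x N) else - / x N)
  else (if Nat.eq_dec i N then - / x N else if Nat.eq_dec i j then / x j else 0).

Lemma unitv_eq i : unitv i i = 1.
Proof. unfold unitv; destruct (Nat.eq_dec i i); congruence. Qed.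
Lemma unitv_ne i k : k <> i -> unitv i k = 0.
Proof. unfold unitv; destruct (Nat.eq_dec k i); congruence. Qed.

Lemma first_deriv N ce q A (HA : 0 < A) (Hce : forall k, (k < N)%nat -> 0 < ce k) y :
  in_open (S N) y -> forall j, (j < S N)%nat ->
  dpl (fun t => Gt_pt N ce q A (shift y t j)) 0 (Dfun N ce q A y j).
Proof.
  intros Hy j Hj. assert (HyN : 0 < y N) by (apply Hy; lia).
  unfold Gt_pt, Gt_av, shift. eapply Deq.
  apply Dplus. apply Dsum. intros k Hk. apply dterm. apply Hy; lia. auto. auto.
  apply dApart; auto.
  unfold Dfun. destruct (Nat.eq_dec j N) as [E|E].
  - subst j. rewrite unitv_eq. rewrite (rsum_ext _ _ (fun k => ce k - y k / y N)). field. lra.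
    intros k Hk. rewrite unitv_ne by lia. ring.
  - rewrite (unitv_ne j N) by lia. rewrite (rsum_ext _ _ (fun k => unitv j k * (ln (y k / (y N * ce k)) + q k))).
    rewrite rsum_unit by lia. field. lra.
    intros k Hk. ring.
Qed.

Lemma second_deriv N ce q A (Hce : forall k, (k < N)%nat -> 0 < ce k) x :
  in_open (S N) x -> forall i j, (i < S N)%nat -> (j < S N)%nat ->
  dpl (fun t => Dfun N ce q A (shift x t i) j) 0 (Hfun N A x i j).
Proof.
  intros Hx i j Hi Hj. assert (HxN : 0 < x N) by (apply Hx; lia).
  unfold Dfun, Hfun, shift. destruct (Nat.eq_dec j N) as [E|E]; cbv beta iota.
  - eapply Deq. apply Dminus. apply Dsum. intros k Hk. apply drat; auto. apply dAr; auto.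
    destruct (Nat.eq_dec i N) as [Ei|Ei].
    + subst i. rewrite unitv_eq.
      rewrite (rsum_ext _ _ (fun k => (/ (x N * x N)) * x k)). rewrite rsum_scal. field. lra.
      intros k Hk. rewrite unitv_ne by lia. field. lra.
    + rewrite (unitv_ne i N) by lia.
      rewrite (rsum_ext _ _ (fun k => unitv i k * (- / x N))). rewrite rsum_unit by lia. field. lra.
      intros k Hk. field. lra.
  - eapply Deq. apply dlnr. apply Hx; lia. auto. apply Hce; lia.
    assert (0 < x j) by (apply Hx; lia).
    destruct (Nat.eq_dec i N) as [Ei|Ei].
    + subst i. rewrite unitv_eq, unitv_ne by lia. field. lra.
    + rewrite (unitv_ne i N) by lia. destruct (Nat.eq_dec i j) as [Eij|Eij].
      * subst. rewrite unitv_eq. field. lra.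
      * rewrite unitv_ne by lia. field. lra.
Qed.

Lemma hess_pd N A (HA : 0 < A) x : in_open (S N) x -> pos_def (S N) (Hfun N A x).
Proof.
  intros Hx h [k0 [Hk0 Hh]]. assert (HxN : 0 < x N) by (apply Hx; lia).
  assert (Hxk : forall k, (k < N)%nat -> 0 < x k) by (intros; apply Hx; lia).
  simpl rsum.
  set (r := h N / x N).
  assert (Inner : forall i, (i < N)%nat ->
     rsum N (fun j => Hfun N A x i j * h j) + Hfun N A x i N * h N = h i / x i - r).
  { intros i Hi. unfold Hfun at 2. destruct (Nat.eq_dec N N) as [_|C]; [|congruence].
    destruct (Nat.eq_dec i N) as [C|_]; [lia|].
    rewrite (rsum_ext _ _ (fun j => unitv i j * (h j / x j))). rewrite rsum_unit by auto. unfold r. field. split; [lra|]. specialize (Hxk i Hi); lra.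
    intros j Hj. unfold Hfun, unitv. destruct (Nat.eq_dec j N); [lia|]. destruct (Nat.eq_dec i N); [lia|].
    destruct (Nat.eq_dec i j); destruct (Nat.eq_dec j i); try lia. subst; field. apply Rgt_not_eq, Hxk; lia. ring. }
  assert (InnerN : rsum N (fun j => Hfun N A x N j * h j) + Hfun N A x N N * h N =
     - / x N * rsum N h + (rsum N x + A) / (x N * x N) * h N).
  { unfold Hfun at 2. destruct (Nat.eq_dec N N) as [_|C]; [|congruence].
    rewrite <- rsum_scal. f_equal. apply rsum_ext. intros j Hj. unfold Hfun.
    destruct (Nat.eq_dec j N); [lia|]. destruct (Nat.eq_dec N N); [|congruence]. ring. }
  rewrite InnerN. rewrite (rsum_ext _ _ (fun i => h i * (h i / x i - r))).
  2:{ intros i Hi. rewrite Inner; auto. }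
  assert (Eq : rsum N (fun i => h i * (h i / x i - r)) + h N * (- / x N * rsum N h + (rsum N x + A) / (x N * x N) * h N)
     = rsum N (fun i => x i * (h i / x i - r) * (h i / x i - r)) + A * r * r).
  { rewrite (rsum_ext N (fun i => x i * (h i / x i - r) * (h i / x i - r))
              (fun i => h i * (h i / x i - r) + ((- r) * h i + (r * r) * x i))).
    rewrite rsum_plus, rsum_plus, !rsum_scal. unfold r. field. lra.
    intros i Hi. specialize (Hxk i Hi). field. lra. }
  rewrite Eq.
  assert (Nn : 0 <= rsum N (fun i => x i * (h i / x i - r) * (h i / x i - r))).
  { apply rsum_nonneg. intros i Hi. specialize (Hxk i Hi). rewrite Rmult_assoc. apply Rmult_le_pos; [lra|apply Rle_0_sqr]. }
  destruct (Req_dec (h N) 0) as [E|E].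
  - assert (k0 < N)%nat by (destruct (Nat.eq_dec k0 N); [subst; congruence|lia]).
    assert (r = 0) by (unfold r; rewrite E; field; lra).
    assert (0 < rsum N (fun i => x i * (h i / x i - r) * (h i / x i - r))).
    { apply (rsum_pos _ _ k0); auto.
      intros i Hi. specialize (Hxk i Hi). rewrite Rmult_assoc. apply Rmult_le_pos; [lra|apply Rle_0_sqr].
      rewrite Rmult_assoc. apply Rmult_lt_0_compat; auto. rewrite H0, Rminus_0_r.
      assert (h k0 / x k0 <> 0). { unfold Rdiv. apply Rmult_integral_contrapositive; split; auto. apply Rinv_neq_0_compat. specialize (Hxk k0 H); lra. }
      apply Rlt_0_sqr in H1. exact H1. }
    assert (A * r * r = 0) by (rewrite H0; ring). lra.
  - assert (r <> 0). { unfold r, Rdiv. apply Rmult_integral_contrapositive; split; auto. apply Rinv_neq_0_compat; lra. }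
    assert (0 < r * r) by (apply Rlt_0_sqr in H; exact H).
    assert (0 < A * r * r) by (rewrite Rmult_assoc; apply Rmult_lt_0_compat; lra). lra.
Qed.

Theorem lemma4
  (N : nat) (HN : (2 <= N)%nat)
  (z : nat -> R) (Hz : exists k, (k < N)%nat /\ z k <> 0)
  (ce : nat -> R) (Hce : forall k, (k < N)%nat -> 0 < ce k)
  (Hneutral : rsum N (fun k => z k * ce k) = 0)
  (A : R) (HA : 0 < A) (zA : R)
  (L : nat -> nat -> R)
  (Lsym : forall i j, (i < N)%nat -> (j < N)%nat -> L i j = L j i)
  (Lpd : pos_def N L)
  (p : nat -> R) (zeta : R) (Hzeta : 0 < zeta)
  (q : nat -> R)
  (Hq : forall k, (k < N)%nat -> rsum N (fun j => L k j * q j) = p k) :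
  (* (1) *)
  ((forall x, in_open (S N) x ->
      exists H, is_hessian (S N) (Gt_pt N ce q A) x H /\ pos_def (S N) H) /\
   convex_on_dom N (Gt_pt N ce q A)) /\
  (* (2) *)
  (forall phimin : R,
     (forall phi, fphi N ce z q phimin <= fphi N ce z q phi) ->
     fphi N ce z q phimin < 0 ->
     forall (cs : nat -> R) (vs phis : R),
       steady_state N z ce A zA L p cs vs phis ->
       in_Sbar N z zA A cs vs /\
       (forall c v, in_Sbar N z zA A c v -> Gt_cv N ce q A cs vs <= Gt_cv N ce q A c v) /\
       (forall c v, in_Sbar N z zA A c v -> Gt_cv N ce q A c v <= Gt_cv N ce q A cs vs ->
          (forall k, (k < N)%nat -> c k = cs k) /\ v = vs)).
Proof.
  split.
  - split.
    + intros x Hx. exists (Hfun N A x). split.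
      * exists (Dfun N ce q A). split.
        -- intros y Hy j Hj. apply first_deriv; auto.
        -- intros i j Hi Hj. apply second_deriv; auto.
      * apply hess_pd; auto.
    + apply convex_part; auto.
  - intros phimin _ _ cs vs phis [Hcs [Hvs [Hcon [Hst Hpiw]]]].
    split.
    + split; [intros k Hk; apply Rlt_le, Hcs; auto|split; auto].
    + apply (part2 N ce q A zA z cs vs phis); auto.
      * intros k Hk. pose proof (muq_zero N ce z L p q cs phis Lpd Hq Hst k Hk) as M.
        unfold mu in M. lra.
      * unfold piw in Hpiw. lra.
Qed.
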